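(* Let $K$ be a non-Archimedean locally compact field of characteristic $p>0$ with group of 1-units $U=1+M_K$. Let $f:U\to U$ be a locally analytic group endomorphism with $f(1+x)=\sum_{n=0}^{\infty}a_nx^n$ for all $x\in M_K$, where $\sum a_nx^n\in 1+x\mathbb{F}_p[[x]]$. If the sequence $\{a_n\}_{n\ge0}$ is ultimately periodic, then $f(1+x)=(1+x)^N$ for some integer $N$.
   Context: $M_K$ is the maximal ideal of the ring of integers $R_K$ of $K$; with constant field $\mathbb{F}$ of order $q$ and uniformizer $\pi$, $K=\mathbb{F}((\pi))$, $U=1+\pi\mathbb{F}[[\pi]]$, and $|x|=q^{-v(x)}$. A continuous function $f$ on a ball $B_{\alpha,t}=\{u\in R_K:|u-\alpha|\le t\}$, $t=|\rho|$, is analytic there if $f(u)=\sum_{n\ge0}c_n\left(\frac{u-\alpha}{\rho}\right)^n$ with $c_n\in K$, $c_n\to0$; $f:U\to K$ is locally analytic if each $\alpha\in U$ has a ball $B_{\alpha,t_\alpha}\subset U$, $t_\alpha>0$, on which $f$ is analytic. A sequence $\{s_n\}$ is ultimately periodic if there are integers $r>0$, $w\ge0$ with $s_{n+r}=s_n$ for all $n\ge w$. *)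

(* Defs.v *)
(* K = F((pi)) with F a finite field; we work with the
   valuation ring R_K = F[[pi]], whose elements are represented by their
   coefficient sequences  nat -> F  (s i = coefficient of pi^i). *)
From HB Require Import structures.
From mathcomp Require Import all_boot all_order all_algebra.
Set Implicit Arguments. Unset Strict Implicit. Unset Printing Implicit Defensive.
Import Order.TTheory GRing.Theory Num.Theory.
Local Open Scope ring_scope.

Section Ser.
Variable F : finFieldType.

Definition ser := nat -> F.

Definition ser_const (c : F) : ser := fun n => if n == 0%N then c else 0.
Definition ser_one : ser := ser_const 1.
Definition ser_add (s t : ser) : ser := fun n => s n + t n.
Definition ser_mul (s t : ser) : ser :=
  fun n => \sum_(i < n.+1) s i * t (n - i)%N.
Definition ser_exp (s : ser) (n : nat) : ser := iter n (ser_mul s) ser_one.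
Definition ser_pi (k : nat) : ser := fun n => (n == k)%:R.

Definition inM (s : ser) : Prop := s 0%N = 0.
Definition inU (s : ser) : Prop := s 0%N = 1.

Definition ser_cvg (S : nat -> ser) (T : ser) : Prop :=
  forall j : nat, exists N : nat, forall M : nat, (N <= M)%N ->
    forall i : nat, (i <= j)%N -> S M i = T i.

Definition ser_to0 (c : nat -> ser) : Prop :=
  forall j : nat, exists N : nat, forall n : nat, (N <= n)%N ->
    forall i : nat, (i <= j)%N -> c n i = 0.

Definition psum (c : nat -> ser) (w : ser) (M : nat) : ser :=
  fun i => \sum_(n < M) ser_mul (c n) (ser_exp w n) i.

Definition ser_series_eq (c : nat -> ser) (w : ser) (T : ser) : Prop :=
  ser_cvg (psum c w) T.

(* f is analytic on the ball B_{alpha,|rho|} = {alpha + rho w : w in R_K}: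
   f(alpha + rho w) = sum_n c_n w^n with c_n in K, c_n -> 0.  Writing
   c_n = pi^{-m} d_n with d_n in R_K (possible since (c_n) is bounded),
   this is  pi^m f(alpha + rho w) = sum_n d_n w^n,  d_n -> 0. *)
Definition analytic_on_ball (f : ser -> ser) (alpha rho : ser) : Prop :=
  exists m : nat, exists d : nat -> ser,
    ser_to0 d /\
    forall w : ser,
      ser_series_eq d w (ser_mul (ser_pi m) (f (ser_add alpha (ser_mul rho w)))).

(* f : U -> K locally analytic: each alpha in U has a ball of positive radius
   |rho|, contained in U (i.e. rho in M_K, rho <> 0), on which f is analytic. *)
Definition locally_analytic (f : ser -> ser) : Prop :=
  forall alpha : ser, inU alpha ->
    exists rho : ser, inM rho /\ (exists i, rho i != 0) /\
      analytic_on_ball f alpha rho.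

Definition U_endo (f : ser -> ser) : Prop :=
  (forall u, inU u -> inU (f u)) /\
  (forall u v, inU u -> inU v -> f (ser_mul u v) =1 ser_mul (f u) (f v)).

Definition is_zpow (v u : ser) (N : int) : Prop :=
  match N with
  | Posz n => v =1 ser_exp u n
  | Negz n => ser_mul v (ser_exp u n.+1) =1 ser_one
  end.

End Ser.

Definition ult_periodic {T : Type} (s : nat -> T) : Prop :=
  exists r : nat, (0 < r)%N /\ exists w : nat,
    forall n : nat, (w <= n)%N -> s (n + r)%N = s n.

(* Main.v *)
Require Import Defs.
From HB Require Import structures.
From mathcomp Require Import all_boot all_order all_algebra.
From Stdlib Require Import FunctionalExtensionality.
From mathcomp Require Import ring zify.
Set Implicit Arguments. Unset Strict Implicit. Unset Printing Implicit Defensive.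
Import Order.TTheory GRing.Theory Num.Theory.
Local Open Scope ring_scope.

Section S.
Variable F : finFieldType.
Implicit Types (s t : ser F) (p q : {poly F}).

Definition T (J : nat) (s : ser F) : {poly F} := \poly_(i < J) s i.
Definition ps (p : {poly F}) : ser F := fun i => p`_i.

Lemma coefT J s i : (T J s)`_i = if (i < J)%N then s i else 0.
Proof. by rewrite coef_poly. Qed.

Lemma TT J p q : take_poly J (p * take_poly J q) = take_poly J (p * q).
Proof.
rewrite -{2}(poly_take_drop J q) mulrDr take_polyD mulrA take_polyMXn_0 addr0.
by [].
Qed.

Lemma TTl J p q : take_poly J (take_poly J p * q) = take_poly J (p * q).
Proof. by rewrite mulrC TT mulrC. Qed.

Lemma take_take J p : take_poly J (take_poly J p) = take_poly J p.
Proof. by rewrite take_poly_id // size_take_poly. Qed.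

Lemma T_take J s : take_poly J (T J s) = T J s.
Proof. by apply/polyP=> i; rewrite coef_take_poly coefT; case: ltnP. Qed.

Lemma T_ext J s t : s =1 t -> T J s = T J t.
Proof. by move=> e; apply/polyP=> i; rewrite !coefT e. Qed.

Lemma T_mul J s t : T J (ser_mul s t) = take_poly J (T J s * T J t).
Proof.
apply/polyP=> i; rewrite coef_take_poly coefT coefM.
case: ltnP => // iJ; apply: eq_bigr => k _; rewrite !coefT.
have kJ : (k < J)%N by apply: leq_ltn_trans iJ; rewrite -ltnS.
have kJ' : (i - k < J)%N by apply: leq_ltn_trans iJ; rewrite leq_subr.
by rewrite kJ kJ'.
Qed.

Lemma T_add J s t : T J (ser_add s t) = T J s + T J t.
Proof. by apply/polyP=> i; rewrite coefD !coefT; case: ltnP; rewrite ?addr0. Qed.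

Lemma T_const J c : T J (ser_const c) = take_poly J c%:P.
Proof.
apply/polyP=> i; rewrite coef_take_poly coefT coefC /ser_const.
by case: ltnP.
Qed.

Lemma T_one J : T J (ser_one F) = take_poly J 1.
Proof. exact: T_const. Qed.

Lemma T_exp J s n : T J (ser_exp s n) = take_poly J (T J s ^+ n).
Proof.
elim: n => [|n IH]; first by rewrite expr0 T_one.
by rewrite /ser_exp iterS -/(ser_exp s n) T_mul IH TT exprS.
Qed.

Lemma T_ps J p : T J (ps p) = take_poly J p.
Proof. by apply/polyP=> i; rewrite !coef_poly. Qed.

Lemma T_eq s t : (forall J, T J s = T J t) -> s =1 t.
Proof.
move=> e i; have := congr1 (fun p => p`_i) (e i.+1).
by rewrite !coefT ltnSn.
Qed.

Lemma take_exp J p n : take_poly J (take_poly J p ^+ n) = take_poly J (p ^+ n).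
Proof.
elim: n => [|n IH]; first by rewrite !expr0.
by rewrite !exprS -TT IH TT TTl.
Qed.

Lemma take_comp J P q : take_poly J (P \Po take_poly J q) = take_poly J (P \Po q).
Proof.
rewrite !comp_polyE !take_poly_sum; apply: eq_bigr => i _.
by rewrite !take_polyZ take_exp.
Qed.

Lemma take2 J p1 p2 (c : {poly F}) :
  take_poly J (take_poly J p1 * take_poly J p2 * c) = take_poly J (p1 * p2 * c).
Proof.
rewrite -mulrA TTl.
have -> : p1 * (take_poly J p2 * c) = take_poly J p2 * (p1 * c) by ring.
by rewrite TTl; congr take_poly; ring.
Qed.

Lemma take_eqP p q : (forall J, take_poly J p = take_poly J q) -> p = q.
Proof.
move=> e; have := e (maxn (size p) (size q)).
by rewrite !take_poly_id // ?leq_maxl ?leq_maxr.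
Qed.


Lemma T_psum J c x M :
  T J (psum c x M) = \sum_(n < M) T J (ser_mul (c n) (ser_exp x n)).
Proof.
apply/polyP=> i; rewrite coefT coef_sum.
case: ltnP => iJ; first by apply: eq_bigr => n _; rewrite coefT iJ.
by rewrite big1 // => n _; rewrite coefT ltnNge iJ.
Qed.

Lemma T_psum_a J (a : nat -> F) x M :
  T J (psum (fun n => ser_const (a n)) x M) =
  take_poly J ((\poly_(n < M) a n) \Po T J x).
Proof.
rewrite T_psum poly_def linear_sum take_poly_sum /=; apply: eq_bigr => n _.
rewrite T_mul T_const T_exp TT TTl linearZ /= rmorphXn /= comp_polyX.
by rewrite mul_polyC.
Qed.

Lemma key_trunc M J P Q q : take_poly M P = take_poly M Q -> (J <= M)%N ->
  q`_0 = 0 -> take_poly J (P \Po q) = take_poly J (Q \Po q).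
Proof.
move=> e JM t0; apply/eqP; rewrite -subr_eq0 -raddfB /= -comp_polyB.
have e1 : take_poly M (P - Q) = 0 by rewrite raddfB /= e subrr.
rewrite -(poly_take_drop M (P - Q)) e1 add0r comp_polyM rmorphXn /= comp_polyX.
have q1 : take_poly 1 q = 0.
  by apply/polyP=> i; rewrite coef_take_poly coef0; case: i => //= ; rewrite t0.
rewrite -(poly_take_drop 1 q) q1 add0r exprMn mulrA.
have -> : ('X^1 : {poly F}) ^+ M = 'X^(M - J) * 'X^J.
  by rewrite -exprM mul1n -exprD subnK.
by rewrite mulrA take_polyMXn_0.
Qed.

Section Per.
Variables (a : nat -> F) (w r : nat).
Definition Ap M := \poly_(n < M) a n.
Definition Rp := Ap (w + r) - 'X^r * Ap w.
Definition Dp : {poly F} := 1 - 'X^r.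

Lemma per_take : (forall n, (w <= n)%N -> a (n + r)%N = a n) ->
  forall M, take_poly M (Dp * Ap M) = take_poly M Rp.
Proof.
move=> per M; apply/polyP=> n; rewrite !coef_take_poly; case: ltnP => // nM.
rewrite /Dp /Rp mulrBl mul1r !coefB !coefXnM !coef_poly nM.
case: (ltnP n r) => nr; first by rewrite (leq_trans nr) ?leq_addl.
rewrite (leq_ltn_trans (leq_subr r n) nM).
case: (ltnP (n - r) w) => nw.
  by move: nw; rewrite -(ltn_add2r r) (subnK nr) => ->.
have : (w + r <= n)%N by move: nw; rewrite -(leq_add2r r) (subnK nr).
rewrite leqNgt => /negbTE ->.
by rewrite -{1}(subnK nr) per // subrr subr0.
Qed.
End Per.

Lemma ps_add1 q : ser_add (ser_one F) (ps q) = ps (1 + q).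
Proof.
apply: functional_extensionality => i.
by rewrite /ser_add /ps coefD coef1 /ser_one /ser_const; case: (i == 0%N).
Qed.

Lemma ps_mul p q : ser_mul (ps p) (ps q) = ps (p * q).
Proof. by apply: functional_extensionality => i; rewrite /ps coefM. Qed.

Section Main.
Variables (f : ser F -> ser F) (a : nat -> F) (w r : nat).
Hypothesis Hser : forall x : ser F, inM x ->
     ser_series_eq (fun n => ser_const (a n)) x (f (ser_add (ser_one F) x)).
Hypothesis Hper : forall n, (w <= n)%N -> a (n + r)%N = a n.
Hypothesis Hend : U_endo f.

Lemma H2 x J : inM x ->
  take_poly J (T J (f (ser_add (ser_one F) x)) * (Dp r \Po T J x)) =
  take_poly J (Rp a w r \Po T J x).
Proof.
move=> Hx; have [N HN] := Hser Hx J.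
have -> : T J (f (ser_add (ser_one F) x)) = T J (psum (fun n => ser_const (a n)) x (maxn N J)).
  apply/polyP=> i; rewrite !coefT; case: ltnP => // iJ.
  by rewrite (HN _ (leq_maxl N J) i (ltnW iJ)).
rewrite T_psum_a TTl mulrC -comp_polyM.
have e := per_take Hper (maxn N J).
have JM : (J <= maxn N J)%N by apply: leq_maxr.
have t0 : (T J x)`_0 = 0 by rewrite coefT; case: (0 < J)%N => //.
rewrite /Ap in e.
exact: (key_trunc e JM t0).
Qed.

Lemma H2q q J : q`_0 = 0 ->
  take_poly J (T J (f (ps (1 + q))) * (Dp r \Po q)) = take_poly J (Rp a w r \Po q).
Proof.
move=> q0; have Hx : inM (ps q) by [].
have := H2 J Hx; rewrite ps_add1 T_ps => e.
by rewrite -TT -take_comp TT e take_comp.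
Qed.

Lemma Hmul q1 q2 : q1`_0 = 0 -> q2`_0 = 0 ->
  f (ps (1 + (q1 + q2 + q1 * q2))) =1 ser_mul (f (ps (1 + q1))) (f (ps (1 + q2))).
Proof.
move=> h1 h2; have [_ Hm] := Hend.
have u1 : inU (ps (1 + q1)) by rewrite /inU /ps coefD coef1 h1 addr0.
have u2 : inU (ps (1 + q2)) by rewrite /inU /ps coefD coef1 h2 addr0.
have := Hm _ _ u1 u2; rewrite ps_mul.
have -> : (1 + q1) * (1 + q2) = 1 + (q1 + q2 + q1 * q2) by ring.
by [].
Qed.

Lemma H3 q1 q2 : q1`_0 = 0 -> q2`_0 = 0 ->
  (Rp a w r \Po (q1 + q2 + q1 * q2)) * (Dp r \Po q1) * (Dp r \Po q2) =
  (Rp a w r \Po q1) * (Rp a w r \Po q2) * (Dp r \Po (q1 + q2 + q1 * q2)).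
Proof.
move=> h1 h2.
have hz : (q1 + q2 + q1 * q2)`_0 = 0 by rewrite !coefD coef0M h1 h2 mul0r !addr0.
apply: take_eqP => J.
have Hz : T J (f (ps (1 + (q1 + q2 + q1 * q2)))) =
   take_poly J (T J (f (ps (1 + q1))) * T J (f (ps (1 + q2)))).
  by rewrite (T_ext J (Hmul h1 h2)) T_mul.
transitivity (take_poly J (T J (f (ps (1 + q1))) * (Dp r \Po q1) *
  (T J (f (ps (1 + q2))) * (Dp r \Po q2)) * (Dp r \Po (q1 + q2 + q1 * q2)))).
  transitivity (take_poly J (take_poly J (Rp a w r \Po (q1 + q2 + q1 * q2)) *
     ((Dp r \Po q1) * (Dp r \Po q2)))); first by rewrite TTl mulrA.
  rewrite -(H2q J hz) TTl Hz -mulrA TTl.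
  by congr take_poly; ring.
rewrite -(take2 J (Rp a w r \Po q1) (Rp a w r \Po q2)) -(H2q J h1) -(H2q J h2) take2.
by congr take_poly; ring.
Qed.

End Main.

Lemma block (E : {poly {poly F}}) :
  (forall K, (0 < K)%N -> E.['X^K] = 0) -> E = 0.
Proof.
move=> H.
have [B HB] : exists B, forall i, (size (E`_i)%R <= B)%N.
  exists (\max_(i < size E) size (E`_i)%R) => i.
  case: (ltnP i (size E)) => hi; first exact: (leq_bigmax (Ordinal hi)).
  by rewrite nth_default // size_poly0.
have H0 := H B.+1 isT; rewrite horner_coef in H0.
apply/polyP => i; rewrite coef0.
case: (ltnP i (size E)) => hi; last by rewrite nth_default.
apply/polyP => j; rewrite coef0.
case: (ltnP j B.+1) => hj; last first.
  by rewrite nth_default // (leq_trans (HB i)) // ltnW.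
have := congr1 (fun p => p`_(B.+1 * i + j)) H0.
rewrite coef_sum coef0 (bigD1 (Ordinal hi)) //= big1.
  by rewrite addr0 -exprM coefMXn ltnNge leq_addr /= addKn.
move=> l /eqP hl; rewrite -exprM coefMXn; case: ifP => // h.
have hl' : (l : nat) <> i by move=> e; apply: hl; apply: val_inj.
case: (ltnP l i) => li.
  rewrite nth_default // (leq_trans (HB l)) //.
  have : (B.+1 * l.+1 <= B.+1 * i)%N by rewrite leq_pmul2l.
  move: h; rewrite mulnS. lia.
exfalso; move: h; rewrite ltnNge => /negP; apply.
have : (B.+1 * i.+1 <= B.+1 * l)%N by rewrite leq_pmul2l // ltn_neqAle li andbT; apply/eqP => e; apply: hl'.
rewrite mulnS. lia.
Qed.

Definition Xc : {poly {poly F}} := ('X)%:P.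
Definition z2 : {poly {poly F}} := Xc + 'X + Xc * 'X.

Lemma z2E : z2 = (1 + 'X)%:P * 'X + ('X)%:P.
Proof. by rewrite /z2 /Xc rmorphD rmorph1 /=; ring. Qed.

Lemma sz1X : size (1 + 'X : {poly F}) = 2.
Proof. by rewrite addrC -polyC1 size_XaddC. Qed.

Lemma nz1X : (1 + 'X : {poly F}) != 0.
Proof. by rewrite -size_poly_eq0 sz1X. Qed.

Lemma size_z2 : size z2 = 2.
Proof.
rewrite z2E size_MXaddC polyC_eq0 (negbTE nz1X) /=.
by rewrite size_polyC nz1X.
Qed.

Lemma lead_z2 : lead_coef z2 = 1 + 'X.
Proof.
rewrite z2E lead_coefDl ?lead_coefMX ?lead_coefC //.
rewrite size_mulX ?polyC_eq0 ?nz1X // !size_polyC nz1X.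
by case: eqP.
Qed.

Lemma lead1B (G : idomainType) (q : {poly G}) : (1 < size q)%N ->
  lead_coef (1 - q) = - lead_coef q.
Proof. by move=> h; rewrite lead_coefDr ?lead_coefN // size_polyN size_poly1. Qed.

Lemma lead_step (R : {poly F}) (r : nat) : (0 < r)%N -> R != 0 ->
  (forall K, (0 < K)%N ->
    (R \Po ('X + 'X^K + 'X * 'X^K)) * (Dp r \Po 'X) * (Dp r \Po 'X^K) =
    (R \Po 'X) * (R \Po 'X^K) * (Dp r \Po ('X + 'X^K + 'X * 'X^K))) ->
  (1 + 'X) ^+ (size R).-1 * Dp r = R * (1 + 'X) ^+ r.
Proof.
move=> r0 R0 H.
have hm : forall (p : {poly F}) y, (p ^:P).[y] = p \Po y by [].
have E0 : (R ^:P \Po z2) * (Dp r)%:P * (Dp r) ^:P -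
          R%:P * R ^:P * ((Dp r) ^:P \Po z2) = 0.
  apply: block => K K0.
  rewrite hornerD hornerN !hornerM !horner_comp !hornerC !hm.
  have -> : z2.['X^K] = 'X + 'X^K + 'X * 'X^K.
    by rewrite /z2 /Xc !hornerD !hornerM hornerC hornerX.
  by have := H K K0; rewrite !comp_polyXr => ->; rewrite subrr.
move/eqP: E0; rewrite subr_eq0 => /eqP /(congr1 lead_coef).
rewrite !lead_coefM lead_coef_comp ?size_z2 // lead_z2 !lead_coef_map /=.
rewrite !lead_coefC size_map_polyC.
have hD : (Dp r) ^:P = 1 - 'X^r by rewrite /Dp rmorphB rmorph1 rmorphXn /= map_polyX.
have sX : (1 < size ('X^r : {poly {poly F}}))%N by rewrite size_polyXn.
rewrite hD lead1B ?size_polyXn // lead_coefXn.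
have -> : (1 - 'X^r) \Po z2 = 1 - z2 ^+ r.
  by rewrite rmorphB rmorph1 rmorphXn /= comp_polyX.
rewrite lead1B ?lead_coef_exp ?lead_z2; last first.
  have := size_exp z2 r; rewrite size_z2 /= mul1n => e.
  have h : (0 < (size (z2 ^+ r)).-1)%N by rewrite e.
  by move: h; case: (size (z2 ^+ r)) => [|[|n]].
rewrite polyCN polyC1 => e.
have l0 : - (lead_coef R)%:P != 0 by rewrite oppr_eq0 polyC_eq0 lead_coef_eq0.
apply: (mulfI l0).
transitivity ((lead_coef R)%:P * (1 + 'X) ^+ (size R).-1 * Dp r * -1); first by ring.
by rewrite e; ring.
Qed.

Lemma canc J p (c : {poly F}) : c`_0 = 1 -> take_poly J (p * c) = 0 -> take_poly J p = 0.
Proof.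
move=> c0 H.
suff P : forall i, (i < J)%N -> p`_i = 0.
  by apply/polyP => i; rewrite coef_take_poly coef0; case: ltnP => // /P.
elim/ltn_ind => i IH iJ.
have := congr1 (fun q => q`_i) H; rewrite coef_take_poly iJ coef0 coefM.
rewrite big_ord_recr /= subnn c0 mulr1 big1 ?add0r //.
move=> k _; by rewrite (IH k (ltn_ord k) (ltn_trans (ltn_ord k) iJ)) mul0r.
Qed.

Lemma canc2 J p q (c : {poly F}) : c`_0 = 1 -> take_poly J (p * c) = take_poly J (q * c) ->
  take_poly J p = take_poly J q.
Proof.
move=> c0 H; apply/eqP; rewrite -subr_eq0 -raddfB; apply/eqP; apply: (canc c0).
by rewrite mulrBl raddfB /= H subrr.
Qed.

Lemma coef0X p n : (p ^+ n)`_0 = p`_0 ^+ n.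
Proof. by elim: n => [|n IH]; rewrite ?expr0 ?coef1 // !exprS coef0M IH. Qed.

Lemma Dt0 r q : (0 < r)%N -> q`_0 = 0 -> (Dp r \Po q)`_0 = 1.
Proof.
move=> r0 q0; rewrite /Dp rmorphB rmorph1 rmorphXn /= comp_polyX coefB coef1.
by rewrite coef0X q0 expr0n eqn0Ngt r0 subr0.
Qed.

Lemma comp1X n q : ((1 + 'X) ^+ n) \Po q = (1 + q) ^+ n.
Proof. by rewrite rmorphXn rmorphD rmorph1 /= comp_polyX. Qed.

Lemma ser_expS s n : ser_exp s n.+1 = ser_mul s (ser_exp s n).
Proof. by []. Qed.

Lemma T_expu J x n : T J (ser_exp (ser_add (ser_one F) x) n) = take_poly J ((1 + T J x) ^+ n).
Proof.
rewrite T_exp T_add T_one -(take_exp J (take_poly J 1 + T J x)) -(take_exp J (1 + T J x)).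
by rewrite !raddfD /= take_take.
Qed.

End S.

Theorem lemma2p4 (F : finFieldType) (f : ser F -> ser F) (a : nat -> F) :
  U_endo f ->
  locally_analytic f ->
  (forall n : nat, exists k : nat, a n = k%:R) ->
  a 0%N = 1 ->
  (forall x : ser F, inM x ->
     ser_series_eq (fun n => ser_const (a n)) x (f (ser_add (ser_one F) x))) ->
  ult_periodic a ->
  exists N : int, forall x : ser F, inM x ->
    is_zpow (f (ser_add (ser_one F) x)) (ser_add (ser_one F) x) N.
Proof.
move=> Hend _ _ a0 Hser [r [r0 [w Hper]]].
have R0 : Rp a w r != 0.
  apply/eqP => e; have := congr1 (fun p : {poly F} => p`_0) e; rewrite coefB coefXnM !coef_poly r0.
  by rewrite addn_gt0 r0 orbT a0 subr0 coef0; apply/eqP; exact: oner_neq0.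
have H4 := lead_step r0 R0 (fun K K0 => H3 Hser Hper Hend (q1 := 'X) (q2 := 'X^K)
   ltac:(by rewrite coefX) ltac:(by rewrite coefXn; case: K K0)).
have H2' := H2 Hser Hper.
case: (leqP r (size (Rp a w r)).-1) => hd.
  exists (Posz ((size (Rp a w r)).-1 - r)) => x Hx /=.
  have HR : Rp a w r = (1 + 'X) ^+ ((size (Rp a w r)).-1 - r) * Dp F r.
    apply: (mulIf (expf_neq0 r (nz1X F))).
    by rewrite -H4 mulrAC -exprD subnK.
  apply: T_eq => J; rewrite T_expu -(T_take J (f _)).
  apply: (canc2 (c := Dp F r \Po T J x)); first by apply: Dt0 => //; rewrite coefT; case: (0 < J)%N.
  by rewrite H2' // -comp1X -rmorphM /= -HR.
exists (Negz (r - (size (Rp a w r)).-1).-1) => x Hx /=.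
have m0 : (0 < r - (size (Rp a w r)).-1)%N by rewrite subn_gt0.
rewrite -(ser_expS (ser_add (ser_one F) x) (r - (size (Rp a w r)).-1).-1) prednK //.
have HR : Dp F r = Rp a w r * (1 + 'X) ^+ (r - (size (Rp a w r)).-1).
  have nz := expf_neq0 (size (Rp a w r)).-1 (nz1X F).
  apply: (mulfI nz); rewrite H4.
  set d := (size (Rp a w r)).-1.
  rewrite (mulrCA ((1 + 'X) ^+ d)) -exprD subnKC //.
  exact: ltnW.
apply: T_eq => J; rewrite T_mul T_expu TT T_one.
apply: (canc2 (c := Dp F r \Po T J x)); first by apply: Dt0 => //; rewrite coefT; case: (0 < J)%N.
transitivity (take_poly J (take_poly J (T J (f (ser_add (ser_one F) x)) * (Dp F r \Po T J x))
   * (1 + T J x) ^+ (r - (size (Rp a w r)).-1))); first by rewrite TTl mulrAC.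
by rewrite H2' // TTl -comp1X -rmorphM /= -HR mul1r.
Qed.
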